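(* Assume $X$ satisfies condition (P). For all $x,w\in W_c$ with $x<w$, $$L_{x,w}=q^{(\ell(x)-\ell(w))/2}\sum(-1)^k\prod_{i=1}^{k+1}P_{x_{i-1},x_i},$$ where the sum runs over all chains $x=x_0<x_1<\cdots<x_{k+1}=w$ in $W$ with $0\le k\le\ell(x,w)-1$ and $x_i\notin W_c$ for $1\le i\le k$.
   Context: Let $X$ be a Coxeter graph with Coxeter system $(W,S)$, length function $\ell$, Bruhat order $\le$, identity $e$; write $\varepsilon_w=(-1)^{\ell(w)}$ and $\ell(x,w)=\ell(w)-\ell(x)$. An element of $W$ is fully commutative if any two of its reduced expressions are related by a sequence of moves $ss'\leftrightarrow s's$ with $s,s'\in S$ commuting; $W_c$ denotes the set of fully commutative elements, $[x,w]_c=\{y\in W_c:x\le y\le w\}$ and $(x,w)_c=\{y\in W_c:x<y<w\}$. $\mathcal H$ is the Hecke algebra of $W$ over $\mathcal A=\mathbb Z[q^{1/2},q^{-1/2}]$ with basis $\{T_w\}_{w\in W}$ and multiplication $T_wT_s=T_{ws}$ if $\ell(ws)>\ell(w)$, $T_wT_s=qT_{ws}+(q-1)T_w$ if $\ell(ws)<\ell(w)$. $J$ is the two-sided ideal generated by the elements $\sum_{w\in\langle s,s'\rangle}T_w$ for all pairs of non-commuting $s,s'\in S$ such that $ss'$ has finite order; $TL(X)=\mathcal H/J$, $\sigma:\mathcal H\to TL(X)$ the projection, $t_w=\sigma(T_w)$. $\{t_w:w\in W_c\}$ is an $\mathcal A$-basis of $TL(X)$; for $w\in W$ the polynomials $D_{x,w}\in\mathbb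 Z[q]$ ($x\in W_c$) are defined by $t_w=\sum_{x\in W_c,\,x\le w}D_{x,w}t_x$, with $D_{x,w}=0$ if $x\not\le w$ (so $D_{x,w}=\delta_{x,w}$ when $w\in W_c$). Let $\iota$ be the ring involution of $\mathcal H$ with $\iota(q^{1/2})=q^{-1/2}$, $\iota(T_w)=(T_{w^{-1}})^{-1}$; it preserves $J$ and so induces an involution of $TL(X)$. $R_{x,w}$ are the $R$-polynomials, defined by $(T_{w^{-1}})^{-1}=\varepsilon_wq^{-\ell(w)}\sum_{x\le w}\varepsilon_xR_{x,w}T_x$, and $P_{x,w}$ are the Kazhdan–Lusztig polynomials, so that $C'_w=q^{-\ell(w)/2}\sum_{x\le w}P_{x,w}T_x$ is $\iota$-invariant, $P_{w,w}=1$, $\deg P_{x,w}\le(\ell(x,w)-1)/2$ for $x<w$. For $w\in W_c$, the polynomials $a_{y,w}\in\mathbb Z[q]$ ($y\in W_c$) are defined by $\iota(t_w)=(t_{w^{-1}})^{-1}=q^{-\ell(w)}\sum_{y\in W_c,\,y\le w}a_{y,w}t_y$, $a_{y,w}=0$ if $y\not\le w$. Let $p\mapsto\overline p$ be the ring involution of $\mathbb Z[q^{1/2},q^{-1/2}]$ with $q^{1/2}\mapsto q^{-1/2}$. For $w\in W_c$, $\{L_{x,w}\}_{x\in W_c}$ is the unique family in $\mathbb Z[q^{-1/2}]$ with $L_{x,w}=0$ if $x\not\le w$, $L_{w,w}=1$, $L_{x,w}\in q^{-1/2}\mathbb Z[q^{-1/2}]$ if $x<w$, and $L_{x,w}=\sum_{y\in[x,w]_c}q^{(\ell(x)-\ell(y))/2}a_{x,y}\,\overline{L_{y,w}}$;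 set $c_w=\sum_{x\in W_c,\,x\le w}q^{-\ell(x)/2}L_{x,w}t_x$. Condition (P) on $X$: $\sigma(C'_w)=c_w$ for all $w\in W_c$ and $\sigma(C'_w)=0$ for all $w\in W\setminus W_c$. (For finite irreducible or affine $X$, this holds exactly when $X$ has no vertex adjacent to three or more vertices and $X\neq\widetilde F_4$; in particular types $A$, $B$, $F_4$, $H_3$, $H_4$, $I_2(m)$.) *)

(* Defs.v *)
From HB Require Import structures.
From mathcomp Require Import all_boot all_order all_algebra.
From Stdlib Require Import Relations ClassicalEpsilon.
Set Implicit Arguments. Unset Strict Implicit. Unset Printing Implicit Defensive.
Import GRing.Theory.
Local Open Scope ring_scope.

(* fsum p F = sum of F x over the x with p x, computed along a         *)
(* duplicate-free enumeration of {x | p x} (chosen by epsilon); all    *)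
(* sets summed over below are finite, so this is the usual sum.        *)
Definition enumerates (T : eqType) (l : seq T) (p : T -> Prop) : Prop :=
  uniq l /\ forall x, x \in l <-> p x.

Definition fsum (T : eqType) (V : nmodType) (p : T -> Prop) (F : T -> V) : V :=
  \sum_(x <- epsilon (inhabits [::]) (fun l => enumerates l p)) F x.

(* cS = vertex set S of the Coxeter graph X, cm s t = m(s,t) with the  *)
(* convention cm s t = 0 meaning m(s,t) = infinity; cW is a group with *)
(* generators cgen s, required below to be the group presented by X.   *)
Record coxeter_datum := CoxeterDatum {
  cS : finType;
  cm : cS -> cS -> nat;
  cW : eqType;
  cmul : cW -> cW -> cW;
  cinv : cW -> cW;
  cone : cW;
  cgen : cS -> cW }.

Definition group_axioms (G : Type) (mul : G -> G -> G) (inv : G -> G) (one : G) : Prop :=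
  (forall x y z, mul x (mul y z) = mul (mul x y) z) /\
  (forall x, mul one x = x) /\ (forall x, mul x one = x) /\
  (forall x, mul (inv x) x = one) /\ (forall x, mul x (inv x) = one).

Definition gpow (G : Type) (mul : G -> G -> G) (one : G) (x : G) (n : nat) : G :=
  iter n (mul x) one.

Section Cox.
Variable C : coxeter_datum.
Local Notation S := (cS C).
Local Notation W := (cW C).

Definition coxeter_matrix : Prop :=
  (forall s : S, cm s s = 1%N) /\ (forall s t : S, cm s t = cm t s) /\
  (forall s t : S, s != t -> cm s t != 1%N).

Definition word_prod (ws : seq S) : W := foldr (fun s acc => cmul (cgen s) acc) (cone C) ws.

Definition coxeter_system : Prop :=
  coxeter_matrix /\
  group_axioms (@cmul C) (@cinv C) (cone C) /\
  (forall s t : S, cm s t != 0%N ->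
     gpow (@cmul C) (cone C) (cmul (cgen s) (cgen t)) (cm s t) = cone C) /\
  (forall w, exists ws, w = word_prod ws) /\
  (forall (G : Type) (mulG : G -> G -> G) (invG : G -> G) (oneG : G) (f : S -> G),
     group_axioms mulG invG oneG ->
     (forall s t : S, cm s t != 0%N -> gpow mulG oneG (mulG (f s) (f t)) (cm s t) = oneG) ->
     exists phi : W -> G, (forall x y, phi (cmul x y) = mulG (phi x) (phi y)) /\
                          (forall s : S, phi (cgen s) = f s)).

Definition is_length (w : W) (n : nat) : Prop :=
  (exists ws, word_prod ws = w /\ size ws = n) /\
  (forall ws, word_prod ws = w -> (n <= size ws)%N).

Definition len (w : W) : nat := epsilon (inhabits 0%N) (is_length w).

Definition reflection (t : W) : Prop :=
  exists u s, t = cmul (cmul u (cgen s)) (cinv u).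

Definition bruhat_step (x y : W) : Prop :=
  exists t, reflection t /\ y = cmul x t /\ (len x < len y)%N.

Definition bruhat : W -> W -> Prop := clos_refl_trans W bruhat_step.
Definition bruhat_lt (x y : W) : Prop := bruhat x y /\ x <> y.

Definition reduced_expr (w : W) (ws : seq S) : Prop :=
  word_prod ws = w /\ size ws = len w.

Definition comm_move (ws1 ws2 : seq S) : Prop :=
  exists (u1 u2 : seq S) (s s' : S),
    ws1 = u1 ++ [:: s; s'] ++ u2 /\ ws2 = u1 ++ [:: s'; s] ++ u2 /\
    cmul (cgen s) (cgen s') = cmul (cgen s') (cgen s).

Definition fully_commutative (w : W) : Prop :=
  forall ws1 ws2, reduced_expr w ws1 -> reduced_expr w ws2 ->
    clos_refl_trans (seq S) comm_move ws1 ws2.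

(* the parabolic subgroup <s, s'> (generators are involutions) *)
Definition in_parabolic2 (s s' : S) (u : W) : Prop :=
  exists bs : seq bool, u = word_prod (map (fun b => if b then s else s') bs).

Fixpoint strict_path (x : W) (l : seq W) : Prop :=
  match l with
  | [::] => True
  | y :: l' => bruhat_lt x y /\ strict_path y l'
  end.

End Cox.

(* The ring A = Z[q^{1/2}, q^{-1/2}], v = q^{1/2}                      *)
Section Rings.
Variables (A : comUnitRingType) (v : A).

Definition laurent_ring : Prop :=
  v \is a GRing.unit /\
  (forall a : A, exists (p : {poly int}) (n : nat),
      a = v ^- n * (map_poly (fun z : int => z%:~R) p).[v]) /\
  (forall p : {poly int}, (map_poly (fun z : int => z%:~R) p).[v] = 0 -> p = 0).

Definition evq (p : {poly int}) : A := (map_poly (fun z : int => z%:~R) p).[v ^+ 2].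
Definition evu (p : {poly int}) : A := (map_poly (fun z : int => z%:~R) p).[v^-1].

Definition is_bar (bar : A -> A) : Prop :=
  (forall a b, bar (a + b) = bar a + bar b) /\ (forall a b, bar (a * b) = bar a * bar b) /\
  bar 1 = 1 /\ bar v = v^-1.
End Rings.

Section Hecke.
Variables (C : coxeter_datum) (A : comUnitRingType) (v : A) (H : algType A)
          (T : cW C -> H).
Local Notation W := (cW C).
Local Notation q := (v ^+ 2).

Definition is_hecke : Prop :=
  T (cone C) = 1 /\
  (forall w s, (len w < len (cmul w (cgen s)))%N -> T w * T (cgen s) = T (cmul w (cgen s))) /\
  (forall w s, (len (cmul w (cgen s)) < len w)%N ->
      T w * T (cgen s) = q *: T (cmul w (cgen s)) + (q - 1) *: T w) /\
  (forall h : H, exists (l : seq W) (c : W -> A), h = \sum_(w <- l) c w *: T w) /\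
  (forall (l : seq W) (c : W -> A), uniq l -> \sum_(w <- l) c w *: T w = 0 ->
      forall w, w \in l -> c w = 0).

Definition is_iota (bar : A -> A) (iota : H -> H) : Prop :=
  (forall h k, iota (h + k) = iota h + iota k) /\ (forall h k, iota (h * k) = iota h * iota k) /\
  iota 1 = 1 /\ (forall (a : A) h, iota (a *: h) = bar a *: iota h) /\
  (forall w, iota (T w) * T (cinv w) = 1 /\ T (cinv w) * iota (T w) = 1).

Definition J_generator (g : H) : Prop :=
  exists s s' : cS C,
    cmul (cgen s) (cgen s') <> cmul (cgen s') (cgen s) /\
    (exists n, (0 < n)%N /\ gpow (@cmul C) (cone C) (cmul (cgen s) (cgen s')) n = cone C) /\
    g = fsum (in_parabolic2 s s') T.

(* sigma : H -> TL(X) = H/J is the quotient map by the two-sided ideal J *)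
Definition is_TL_projection (TL : algType A) (sigma : H -> TL) : Prop :=
  (forall h k, sigma (h + k) = sigma h + sigma k) /\ (forall h k, sigma (h * k) = sigma h * sigma k) /\
  sigma 1 = 1 /\ (forall (a : A) h, sigma (a *: h) = a *: sigma h) /\
  (forall y : TL, exists h, sigma h = y) /\
  (forall h, sigma h = 0 <->
     exists l : seq ((H * H) * H),
       (forall tr, tr \in l -> J_generator tr.1.2) /\
       h = \sum_(tr <- l) tr.1.1 * tr.1.2 * tr.2).

Definition TL_basis (TL : algType A) (sigma : H -> TL) : Prop :=
  (forall y : TL, exists (l : seq W) (c : W -> A),
      (forall w, w \in l -> fully_commutative w) /\ y = \sum_(w <- l) c w *: sigma (T w)) /\
  (forall (l : seq W) (c : W -> A), uniq l -> (forall w, w \in l -> fully_commutative w) ->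
      \sum_(w <- l) c w *: sigma (T w) = 0 -> forall w, w \in l -> c w = 0).

Definition Cprime (P : W -> W -> {poly int}) (w : W) : H :=
  v ^- len w *: fsum (fun x => bruhat x w) (fun x => evq v (P x w) *: T x).

Definition is_KL (iota : H -> H) (P : W -> W -> {poly int}) : Prop :=
  (forall w, P w w = 1) /\
  (forall x w, ~ bruhat x w -> P x w = 0) /\
  (forall x w, bruhat_lt x w -> (2 * (size (P x w)).-1 < len w - len x)%N) /\
  (forall w, iota (Cprime P w) = Cprime P w).

(* the polynomials a_{y,w}: iota(t_w) = q^{-l(w)} sum_{y in W_c, y <= w} a_{y,w} t_y, *)
(* where the involution of TL(X) is induced by iota: iota(sigma h) = sigma(iota h). *)
Definition is_a (TL : algType A) (sigma : H -> TL) (iota : H -> H)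
    (a : W -> W -> {poly int}) : Prop :=
  forall w, fully_commutative w ->
    sigma (iota (T w)) =
      q ^- len w *: fsum (fun y => fully_commutative y /\ bruhat y w)
                          (fun y => evq v (a y w) *: sigma (T y)) /\
    (forall y, fully_commutative y -> ~ bruhat y w -> a y w = 0).

(* the family L_{x,w} (elements of Z[q^{-1/2}], given as polynomials in q^{-1/2}) *)
Definition is_L (bar : A -> A) (a L : W -> W -> {poly int}) : Prop :=
  forall w, fully_commutative w ->
    (forall x, fully_commutative x -> ~ bruhat x w -> L x w = 0) /\
    L w w = 1 /\
    (forall x, fully_commutative x -> bruhat_lt x w -> (L x w)`_0 = 0) /\
    (forall x, fully_commutative x ->
       evu v (L x w) =
         fsum (fun y => fully_commutative y /\ bruhat x y /\ bruhat y w)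
              (fun y => v ^ ((len x)%:Z - (len y)%:Z) * evq v (a x y) * bar (evu v (L y w)))).

Definition c_elt (TL : algType A) (sigma : H -> TL) (L : W -> W -> {poly int}) (w : W) : TL :=
  fsum (fun x => fully_commutative x /\ bruhat x w)
       (fun x => (v ^- len x * evu v (L x w)) *: sigma (T x)).

Definition condition_P (TL : algType A) (sigma : H -> TL) (P L : W -> W -> {poly int}) : Prop :=
  forall w, (fully_commutative w -> sigma (Cprime P w) = c_elt sigma L w) /\
            (~ fully_commutative w -> sigma (Cprime P w) = 0).

End Hecke.

Definition admissible_chain (C : coxeter_datum) (x w : cW C) (c : seq (cW C)) : Prop :=
  strict_path x (rcons c w) /\ (size c <= len w - len x - 1)%N /\
  (forall y, y \in c -> ~ fully_commutative y).

(* Main.v *)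
Require Import Defs.
From HB Require Import structures.
From mathcomp Require Import all_boot all_order all_algebra.
From Stdlib Require Import Relations ClassicalEpsilon.
From mathcomp Require Import zify.
Set Implicit Arguments. Unset Strict Implicit. Unset Printing Implicit Defensive.
Import GRing.Theory.
Local Open Scope ring_scope.

Definition dec (P : Prop) : bool := if excluded_middle_informative P then true else false.
Lemma decP (P : Prop) : reflect P (dec P).
Proof. rewrite /dec; case: excluded_middle_informative => h; by constructor. Qed.

Lemma fsum_sub (T : eqType) (V : nmodType) (p : T -> Prop) (F : T -> V) (l : seq T) :
  uniq l -> (forall x, p x -> x \in l) -> (forall x, x \in l -> ~ p x -> F x = 0) ->
  fsum p F = \sum_(x <- l) F x.
Proof.
move=> ul pl F0.
set l0 := [seq x <- l | dec (p x)].
have e0 : enumerates l0 p.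
  split; first by rewrite filter_uniq.
  move=> x; rewrite mem_filter; split; first by case/andP=> /decP.
  by move=> px; rewrite (pl _ px) andbT; apply/decP.
have := epsilon_spec (inhabits [::]) (fun l => enumerates l p) (ex_intro _ l0 e0).
rewrite /fsum; set e := epsilon _ _ => -[ue he].
have pe : perm_eq e l0.
  apply: uniq_perm => //; first by case: e0.
  move=> x; apply/idP/idP => h; first by apply/(proj2 e0 x)/he.
  by apply/he/(proj2 e0 x).
rewrite (perm_big _ pe) /l0 big_filter big_mkcond /=.
apply: eq_big_seq => x xl; case: decP => // np; by rewrite F0.
Qed.
Section Cx.
Variable C : coxeter_datum.
Local Notation W := (cW C).

Lemma le_len (x y : W) : bruhat x y -> (len x <= len y)%N.
Proof.
elim=> [a b [t [_ [_ h]]]|a|a b c _ h1 _ h2]; [exact: ltnW|by []|exact: leq_trans h1 h2].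
Qed.

Lemma lt_len (x y : W) : bruhat_lt x y -> (len x < len y)%N.
Proof.
case=> h ne; have h' := clos_rt_rt1n _ _ _ _ h.
inversion h' as [|y0 z [t [_ [_ h1]]] h2]; first by subst.
exact: leq_trans h1 (le_len (clos_rt1n_rt _ _ _ _ h2)).
Qed.

Lemma bruhat_trans (x y z : W) : bruhat x y -> bruhat y z -> bruhat x z.
Proof. move=> h1 h2; exact: rt_trans h1 h2. Qed.

Lemma bruhat_refl (x : W) : bruhat x x.
Proof. exact: rt_refl. Qed.

Lemma len_spec (w : W) : (exists ws, w = word_prod ws) -> is_length w (len w).
Proof.
move=> [ws0 e0].
suff: exists n, is_length w n by apply: epsilon_spec.
have : forall n, (exists ws, word_prod ws = w /\ (size ws <= n)%N) -> exists m, is_length w m.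
  elim=> [|n IH] [ws [e s]].
    exists (size ws); split; first by exists ws.
    by move=> ws' _; rewrite leqn0 in s; rewrite (eqP s).
  case: (classic (exists ws, word_prod ws = w /\ (size ws <= n)%N)); first exact: IH.
  move=> nex; exists (size ws); split; first by exists ws.
  move=> ws' e'; rewrite leqNgt; apply/negP => lt; apply: nex; exists ws'; split=> //.
  by rewrite -ltnS; exact: leq_trans lt s.
by apply; exists ws0; split.
Qed.

Fixpoint words (n : nat) : seq (seq (cS C)) :=
  if n is n'.+1 then [::] :: [seq s :: u | s <- enum (cS C), u <- words n'] else [:: [::]].

Lemma mem_words n ws : (size ws <= n)%N -> ws \in words n.
Proof.
elim: n ws => [|n IH] [|s ws] //= h.
rewrite inE; apply/orP; right; apply/allpairsP; exists (s, ws) => /=.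
by rewrite mem_enum IH.
Qed.

Lemma interval_fin (gen : forall w : W, exists ws, w = word_prod ws) (w : W) :
  exists U : seq W, uniq U /\ forall z, z \in U <-> bruhat z w.
Proof.
exists (undup [seq z <- map (@word_prod C) (words (len w)) | dec (bruhat z w)]).
split; first exact: undup_uniq.
move=> z; rewrite mem_undup mem_filter; split; first by case/andP=> /decP.
move=> h; apply/andP; split; first exact/decP.
have [[ws [e s]] _] := len_spec (gen z).
by rewrite -e map_f // mem_words // s le_len.
Qed.

End Cx.
Lemma uniq_flat_cons (T : eqType) (s : seq T) (f : T -> seq (seq T)) :
  uniq s -> (forall z, uniq (f z)) -> uniq (flatten [seq map (cons z) (f z) | z <- s]).
Proof.
elim: s => [//|z s IH] /= /andP[zs us] uf.
have inj : injective (cons z) by move=> a b [].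
rewrite cat_uniq IH // andbT (map_inj_uniq inj) uf /=.
apply/hasP => -[c /flatten_mapP [z' z's /mapP [c' _ ->]] /mapP [c'' _ [ez _]]].
by move: zs; rewrite -ez z's.
Qed.

Section Chains.
Variable C : coxeter_datum.
Local Notation W := (cW C).
Variable w : W.
Variable U : seq W.
Hypothesis hU : uniq U.
Hypothesis mU : forall z, z \in U <-> bruhat z w.

Definition ltb (y z : W) := dec (bruhat_lt y z).
Definition nfb (z : W) := ~~ dec (fully_commutative z).

Fixpoint chains (n : nat) (x : W) : seq (seq W) :=
  (if ltb x w then [:: [::]] else [::]) ++
  (if n is n'.+1 then flatten [seq map (cons z) (chains n' z) | z <- [seq z <- U | ltb x z && nfb z]]
   else [::]).

Lemma sp_lt (x : W) c : strict_path x (rcons c w) -> bruhat_lt x w /\ (len x + size c < len w)%N.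
Proof.
elim: c x => [|z c IH] x /=; first by case=> h _; split=> //; rewrite addn0; exact: lt_len.
case=> hxz /IH [[hzw nzw] hs]; have lxz := lt_len hxz.
split; last by rewrite addnS -addSn; exact: leq_ltn_trans (leq_add lxz (leqnn _)) hs.
split; first exact: bruhat_trans (proj1 hxz) hzw.
move=> e; move: lxz hs; rewrite e => a b.
have := leq_ltn_trans (leq_addr _ _) b; by rewrite ltnNge (ltnW a).
Qed.

Lemma mem_chains n x c : c \in chains n x <->
  (strict_path x (rcons c w) /\ (forall y, y \in c -> ~ fully_commutative y) /\ (size c <= n)%N).
Proof.
elim: n x c => [|n IH] x [|z c] /=.
- rewrite cats0 /ltb; case: decP => h /=.
  + rewrite inE eqxx; split=> // _; by split; [split|split].
  + rewrite in_nil; split=> //; by case=> [[? _] _].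
- rewrite cats0; case: (ltb x w) => //; split=> // -[_ [_]] //.
- rewrite mem_cat /ltb; case: decP => h.
  + split=> [_|]; [by split; [split|split] | by rewrite inE eqxx].
  + split; last by case=> [[? _] _].
    by case/allpairsPdep => z' [c' [_ _]].
- rewrite mem_cat; have -> : (z :: c \in (if ltb x w then [:: [::]] else [::])) = false.
    by case: (ltb x w).
  rewrite /=; split.
  + case/allpairsPdep => z' [c' []]; rewrite mem_filter => /andP [/andP [lxz nz] _] /IH [h1 [h2 h3]] [ez ec].
    subst z' c'; split; first by split=> //; exact/decP.
    split=> //; move=> y; rewrite inE => /orP [/eqP ->|]; last exact: h2.
    by move: nz; rewrite /nfb; case: decP.
  + case=> [[hxz hp] [hnf hs]]; apply/allpairsPdep; exists z, c; split=> //.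
      rewrite mem_filter; apply/andP; split; last by apply/mU; exact: proj1 (proj1 (sp_lt hp)).
      apply/andP; split; first exact/decP.
      by rewrite /nfb; case: decP => // f; case: (hnf z); rewrite ?inE ?eqxx.
    apply/IH; split=> //; split=> // y yc; apply: hnf; by rewrite inE yc orbT.
Qed.

Lemma uniq_chains n x : uniq (chains n x).
Proof.
elim: n x => [|n IH] x /=; first by rewrite cats0; case: (ltb x w).
rewrite cat_uniq uniq_flat_cons ?filter_uniq // andbT; case: (ltb x w) => //=.
  by apply/hasP => -[c /allpairsPdep [z [c' [_ _ ->]]]].
by apply/hasP => -[c _].
Qed.

Variable A : comUnitRingType.
Variable Q : W -> W -> A.

Definition weight (x : W) (c : seq W) : A :=
  (-1) ^+ size c * \prod_(p <- zip (x :: c) (rcons c w)) Q p.1 p.2.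

Definition Rc (x : W) : A := fsum (admissible_chain x w) (weight x).

Lemma chains_fsum n x : (len w - len x - 1 <= n)%N -> Rc x = \sum_(c <- chains n x) weight x c.
Proof.
move=> hn; apply: fsum_sub; first exact: uniq_chains.
- move=> c [h1 [h2 h3]]; apply/mem_chains; split=> //; split=> //; exact: leq_trans h2 hn.
- move=> c /mem_chains [h1 [h2 h3]] na; exfalso; apply: na; split=> //; split=> //.
  have [_ s] := sp_lt h1; lia.
Qed.

Lemma Rc_rec x : bruhat_lt x w ->
  Rc x = Q x w - \sum_(z <- U | ltb x z && nfb z) Q x z * Rc z.
Proof.
move=> hxw; have lxw := lt_len hxw.
have hn : (len w - len x - 1 <= len w)%N by rewrite -subnDA leq_subr.
rewrite (chains_fsum hn); case E : (len w) lxw hn => [//|n'] _ _ /=.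
have -> : ltb x w by exact/decP.
rewrite big_cat big_seq1 /weight /= big_cons big_nil expr0 mul1r mulr1.
congr (_ + _); rewrite big_flatten big_map big_filter -sumrN; apply: eq_big => // z /andP [lz _].
rewrite big_map (chains_fsum (n := n')) ?mulr_sumr; last first.
  by rewrite E; lia.
rewrite -sumrN; apply: eq_bigr => c _; rewrite /weight /= big_cons exprS /=.
by rewrite mulN1r mulNr mulrCA.
Qed.

End Chains.
Lemma evq1 (A : comUnitRingType) (v : A) : evq v 1 = 1.
Proof. by rewrite /evq -polyC1 map_polyC hornerC /=. Qed.
Lemma evq0 (A : comUnitRingType) (v : A) : evq v 0 = 0.
Proof. by rewrite /evq map_poly0 horner0. Qed.

Theorem mainTheorem20
  (C : coxeter_datum) (A : comUnitRingType) (v : A) (bar : A -> A)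
  (H : algType A) (T : cW C -> H) (iota : H -> H)
  (TL : algType A) (sigma : H -> TL)
  (P a L : cW C -> cW C -> {poly int}) :
  coxeter_system C ->
  laurent_ring v -> is_bar v bar ->
  is_hecke v T -> is_iota T bar iota ->
  is_TL_projection T sigma -> TL_basis T sigma ->
  is_KL v T iota P -> is_a v T sigma iota a -> is_L v bar a L ->
  condition_P v T sigma P L ->
  forall x w : cW C,
    fully_commutative x -> fully_commutative w -> bruhat_lt x w ->
    evu v (L x w) =
      v ^ ((len x)%:Z - (len w)%:Z) *
      fsum (admissible_chain x w)
           (fun c => (-1) ^+ size c *
              \prod_(p <- zip (x :: c) (rcons c w)) evq v (P p.1 p.2)).
Proof.
move=> [_ [_ [_ [gen _]]]] [vU _] _ _ _ [sD [_ [_ [sZ _]]]] [_ indep] [P1 [P0 _]] _ _ condP x w fx fw xw.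
have [U [hU mU]] := interval_fin gen w.
set Q := fun y z => evq v (P y z).
set t := fun y => sigma (T y).
have s0 : sigma 0 = 0.
  by apply/eqP; rewrite -(subrr (sigma 0)) -{2}(addr0 0) sD addrK.
have ssum : forall (l : seq (cW C)) (F : cW C -> A), sigma (\sum_(y <- l) F y *: T y) = \sum_(y <- l) F y *: t y.
  move=> l F; elim: l => [|y l IH]; first by rewrite !big_nil.
  by rewrite !big_cons sD sZ IH.
have Cw : forall z, z \in U -> sigma (Cprime v T P z) = v ^- len z *: \sum_(y <- U) Q y z *: t y.
  move=> z zU; rewrite /Cprime sZ (@fsum_sub _ _ _ _ U) // ?ssum //.
  - by move=> y byz; apply/mU; apply: bruhat_trans byz (proj1 (mU z) zU).
  - by move=> y _ nb; rewrite P0 // evq0 scale0r.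
have stepA : forall z, z \in U -> ~ fully_commutative z -> \sum_(y <- U) Q y z *: t y = 0.
  move=> z zU nz; have := proj2 (condP z) nz; rewrite Cw // => h.
  by rewrite -[LHS]scale1r -(mulrV (unitrX (len z) vU)) -scalerA h scaler0.
have stepB : forall z, z \in U -> ~ fully_commutative z ->
    \sum_(y <- U | ltb y z) Q y z *: t y = - t z.
  move=> z zU nz.
  have e2 : \sum_(y <- U | ~~ ltb y z) Q y z *: t y = t z.
    rewrite big_mkcond (bigD1_seq z) //= /ltb.
    have -> : dec (bruhat_lt z z) = false by case: decP => // -[].
    rewrite /= /Q P1 evq1 scale1r big1_seq ?addr0 // => y /andP [ny yU]; case: decP => //= h.
    rewrite P0 ?evq0 ?scale0r // => b; apply: h; split=> // e; by rewrite e eqxx in ny.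
  have := stepA z zU nz; rewrite (bigID (fun y => ltb y z)) /= e2 => /eqP; rewrite addr_eq0 => /eqP //.
set R := Rc w Q.
set Rt := fun y => Q y w - \sum_(z <- U | ltb y z && nfb z) Q y z * R z.
have Rrec : forall y, y \in U -> ~ fully_commutative y -> R y = Rt y.
  move=> y yU ny; apply: (Rc_rec hU mU); split; first exact/mU.
  by move=> e; apply: ny; rewrite e.
have tele : \sum_(y <- U) Q y w *: t y = \sum_(y <- U | dec (fully_commutative y)) Rt y *: t y.
  have e1 : forall y, Q y w = Rt y + \sum_(z <- U | ltb y z && nfb z) Q y z * R z.
    by move=> y; rewrite /Rt subrK.
  under eq_bigr => y _ do rewrite e1 scalerDl.
  rewrite big_split /=.
  have -> : \sum_(y <- U) (\sum_(z <- U | ltb y z && nfb z) Q y z * R z) *: t y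
          = - \sum_(z <- U | nfb z) R z *: t z.
    have e3 : forall y, (\sum_(z <- U | ltb y z && nfb z) Q y z * R z) *: t y =
       \sum_(z <- U) (if ltb y z && nfb z then (Q y z * R z) *: t y else 0).
      by move=> y; rewrite scaler_suml big_mkcond.
    rewrite (eq_bigr _ (fun y _ => e3 y)) (@exchange_big TL 0 +%R) /= -sumrN [RHS]big_mkcond /=; apply: eq_big_seq => z zU.
    rewrite /nfb; case: decP => fz /=.
      by apply: big1 => y _; rewrite andbF.
    rewrite -scalerN -(stepB z zU fz) scaler_sumr [RHS]big_mkcond; apply: eq_bigr => y _.
    rewrite andbT; case: (ltb y z) => //; by rewrite scalerA mulrC.
  rewrite (bigID (fun y => dec (fully_commutative y))) /= -addrA.
  rewrite [X in _ + X](_ : _ = 0) ?addr0 //; apply/eqP; rewrite addr_eq0 opprK; apply/eqP.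
  rewrite /nfb -[LHS]big_filter -[RHS]big_filter; apply: eq_big_seq => y; rewrite mem_filter => /andP [ny yU].
  rewrite Rrec //; by move: ny; rewrite /nfb; case: decP.
have cw := proj1 (condP w) fw.
rewrite Cw ?tele in cw; last by apply/mU; exact: bruhat_refl.
rewrite /c_elt (@fsum_sub _ _ _ _ [seq y <- U | dec (fully_commutative y)]) in cw; first last.
- by move=> y; rewrite mem_filter => /andP [/decP fy /mU yw] [].
- by move=> y [fy yw]; rewrite mem_filter; apply/andP; split; [exact/decP|exact/mU].
- exact: filter_uniq.
move/eqP: cw; rewrite big_filter scaler_sumr -subr_eq0 -sumrB -big_filter.
under eq_bigr => y _ do rewrite scalerA -scalerBl.
move/eqP => /indep h.
have xU : x \in U by apply/mU; exact: proj1 xw.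
have xin : x \in [seq i <- U | dec (fully_commutative i)].
  by rewrite mem_filter xU andbT; exact/decP.
have /eqP := h (filter_uniq _ hU) (fun y yin => ltac:(by move: yin; rewrite mem_filter => /andP [/decP])) x xin.
rewrite subr_eq0 => /eqP ex.
have -> : fsum (admissible_chain x w)
    (fun c => (-1) ^+ size c * \prod_(p <- zip (x :: c) (rcons c w)) evq v (P p.1 p.2)) = R x by [].
have -> : R x = Rt x.
  apply: (Rc_rec hU mU) xw.
rewrite exprzDr // -exprnN.
have e4 : v ^ (len x)%:Z = v ^+ len x by [].
rewrite e4 -mulrA ex mulrA mulrV ?mul1r //; exact: unitrX.
Qed.
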